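(* Let $G$ be a bipartite graph with left degree $D$ that has $(\tfrac 2 3 D + 2)$-expansion up to $K+1$. Let $Y$ be a set of right nodes with $\#Y \le 2K+1$, and let $P$ be a set of left nodes such that every $x \in P$ satisfies $\#({\mathcal N}(x) \cap Y) \ge D/3$. Then $\#P \le K$.
   Context: ${\mathcal N}(x)$ is the set of neighbors of $x$. Left degree $D$ means every left node has exactly $D$ neighbors. A graph has $e$-expansion up to $K$ if every set $S$ of left nodes with $\#S\le K$ has at least $e\,\#S$ neighbors. *)

(* Defs.v *)
From mathcomp Require Import all_boot all_order all_algebra.
Set Implicit Arguments. Unset Strict Implicit. Unset Printing Implicit Defensive.
Import Order.TTheory GRing.Theory Num.Theory.

(* A bipartite graph with left nodes of type L and right nodes of type R
   is given by its neighbour map N : L -> {set R}. *)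

Definition nbhd (L R : finType) (N : L -> {set R}) (S : {set L}) : {set R} :=
  \bigcup_(x in S) N x.

Definition left_degree (L R : finType) (N : L -> {set R}) (D : nat) : Prop :=
  forall x : L, #|N x| = D.

Definition expansion_upto (L R : finType) (N : L -> {set R}) (e : rat) (K : nat)
  : Prop :=
  forall S : {set L}, #|S| <= K -> (e * #|S|%:R <= #|nbhd N S|%:R)%R.

(* Main.v *)
Require Import Defs.
From mathcomp Require Import all_boot all_order all_algebra.
From mathcomp Require Import lra.
Import Order.TTheory GRing.Theory Num.Theory.

Lemma sub_card_k (T : finType) (A : {set T}) k :
  k <= #|A| -> exists B : {set T}, B \subset A /\ #|B| = k.
Proof.
elim: k => [|k IH] hk; first by exists set0; rewrite sub0set cards0.
have [B [BA cB]] := IH (ltnW hk).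
have : 0 < #|A :\: B| by rewrite cardsD (setIidPr BA) cB subn_gt0.
case/card_gt0P => x; rewrite inE => /andP [xB xA].
exists (x |: B); rewrite subUset sub1set xA BA; split => //.
by rewrite cardsU1 xB cB.
Qed.

Lemma card_bigcup_le (I T : finType) (S : {set I}) (F : I -> {set T}) :
  #|\bigcup_(x in S) F x| <= \sum_(x in S) #|F x|.
Proof.
elim/big_rec2: _ => [|i n U _ h]; first by rewrite cards0.
by rewrite (leq_trans (leq_card_setU (F i) U).1) ?leq_add2l.
Qed.

Theorem lemma5 (L R : finType) (N : L -> {set R}) (D K : nat)
  (hdeg : left_degree N D)
  (hexp : expansion_upto N (2%:R / 3%:R * D%:R + 2%:R)%R K.+1)
  (Y : {set R}) (hY : #|Y| <= K.*2.+1)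
  (P : {set L})
  (hP : forall x, x \in P -> (D%:R / 3%:R <= #|N x :&: Y|%:R :> rat)%R) :
  #|P| <= K.
Proof.
rewrite leqNgt; apply/negP => hPK.
have [S [SP cS]] := @sub_card_k _ P _ hPK.
have h1 := hexp S (eq_leq cS).
have h2 : #|nbhd N S| <= #|Y| + \sum_(x in S) #|N x :\: Y|.
  apply: (leq_trans _ (leq_trans (leq_card_setU Y (\bigcup_(x in S) (N x :\: Y))).1 _)); last by rewrite leq_add2l card_bigcup_le.
  apply: subset_leq_card; apply/subsetP => r /bigcupP [x xS rx].
  rewrite !inE; case: (boolP (r \in Y)) => //= rY.
  by apply/bigcupP; exists x => //; rewrite inE rY.
have h3 : (\sum_(x in S) #|N x :\: Y|%:R <= \sum_(x in S) (2%:R / 3%:R * D%:R) :> rat)%R.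
  apply: ler_sum => x xS.
  have := hP x (subsetP SP x xS).
  have := cardsID Y (N x); rewrite hdeg => e.
  have : (#|N x :&: Y|%:R + #|N x :\: Y|%:R = D%:R :> rat)%R by rewrite -natrD e.
  move=> e2 h; lra.
rewrite sumr_const cS in h3.
have h2r : (#|nbhd N S|%:R <= #|Y|%:R + \sum_(x in S) #|N x :\: Y|%:R :> rat)%R.
  by rewrite -natr_sum -natrD ler_nat.
have hYr : (#|Y|%:R <= 2%:R * K%:R + 1 :> rat)%R.
  by rewrite -natrM natr1 ler_nat mul2n.
rewrite cS in h1.
have eK : (K.+1%:R = K%:R + 1 :> rat)%R by rewrite natr1.
rewrite -(mulr_natr _ K.+1) eK in h3; rewrite eK in h1.
move: h1 h2r h3 hYr.
move: (\sum_(x in S) _)%R (#|nbhd N S|%:R : rat)%R (#|Y|%:R : rat)%R (D%:R : rat)%R (K%:R : rat)%R.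
clear.
move=> s n y d k *.
nra.
Qed.
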